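(* Let $m,n\ge 0$ be integers with $m-n\equiv 1\pmod 2$, put $N=m+n$ and $k=\frac{N-1}{2}$. Let $1\le p,q,r<\infty$ satisfy $\frac1r=\frac1p+\frac1q-1$. Then $$\left(\frac{2}{r+1}+\binom{N}{k}^r+\sum_{\substack{j=0\\ j\ne k}}^{N-1}\frac{\binom{N}{j+1}^{r+1}-\binom{N}{j}^{r+1}}{(r+1)\left[\binom{N}{j+1}-\binom{N}{j}\right]}\right)^{1/r} \le \Big(\sum_{j=0}^{m}\binom{m}{j}^q\Big)^{1/q}\Big(\sum_{j=0}^{n}\binom{n}{j}^p\Big)^{1/p}.$$
   Context: Binomial coefficients have their usual meaning. *)

(* Defs.v *)
From Stdlib Require Export Reals ZArith.
Open Scope R_scope.

Definition binom_power_sum (n : nat) (s : R) : R :=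
  sum_f_R0 (fun j => Rpower (C n j) s) n.

Definition lhs_term (N k : nat) (r : R) (j : nat) : R :=
  if Nat.eqb j k then 0
  else (Rpower (C N (S j)) (r + 1) - Rpower (C N j) (r + 1)) /
       ((r + 1) * (C N (S j) - C N j)).

(* sum_{j=0, j<>k}^{N-1} ... ; requires N >= 1 (true since N is odd). *)
Definition lhs_sum (N k : nat) (r : R) : R :=
  sum_f_R0 (lhs_term N k r) (N - 1).

(* Main.v *)
Require Import Defs.
From Stdlib Require Import Reals ZArith Lra Lia Psatz.
Open Scope R_scope.
From Stdlib Require Import Reals.
From mathcomp Require ssreflect ssrbool eqtype ssrnat fintype bigop binomial.
Module BinM.
Import ssreflect ssrbool eqtype ssrnat fintype bigop binomial.
Open Scope R_scope.
Definition bn (n k : nat) : nat := 'C(n, k).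

Lemma fact_eq n : Factorial.fact n = n`!.
Proof. elim: n => [|n IH] //=. rewrite factS -IH. by []. Qed.

Lemma binC n j : (j <= n)%coq_nat -> C n j = INR (bn n j).
Proof.
rewrite /bn. move=> /leP H. rewrite /C !fact_eq -(bin_fact H).
rewrite -!multE !mult_INR -minusE. field. split; apply: not_0_INR; apply/eqP; rewrite -lt0n; apply: fact_gt0.
Qed.

Lemma bin_pos n j : (j <= n)%coq_nat -> 0 < INR (bn n j).
Proof. rewrite /bn. move=> /leP H. apply: lt_0_INR. apply/ltP. by rewrite bin_gt0. Qed.

Lemma bin_zero n j : (n < j)%coq_nat -> INR (bn n j) = 0.
Proof. rewrite /bn. move=> /ltP H. by rewrite bin_small. Qed.

Lemma sumINR (F : nat -> nat) l :
  INR (\sum_(i < l.+1) F i) = sum_f_R0 (fun i => INR (F i)) l.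
Proof.
elim: l => [|l IH]; first by rewrite big_ord_recr big_ord0 /=.
rewrite big_ord_recr /= plus_INR IH. by [].
Qed.

Lemma vand m n l : INR (bn (m + n)%coq_nat l) = sum_f_R0 (fun i => INR (bn m i) * INR (bn n (l - i)%coq_nat)) l.
Proof. rewrite /bn.
rewrite -Vandermonde (sumINR (fun j => ('C(m, j) * 'C(n, l - j))%N)). apply PartSum.sum_eq; move=> i _. by rewrite -multE mult_INR -minusE.
Qed.

Lemma bin_mid k : bn (k + k + 1) k = bn (k + k + 1) k.+1.
Proof. rewrite /bn.
rewrite -(bin_sub (n:=k+k+1) (m:=k.+1)); last by rewrite addn1 ltnS leq_addl.
by rewrite addn1 subSS addnK.
Qed.
End BinM.
From Stdlib Require Import Reals Lra Psatz.
Open Scope R_scope.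

Lemma exp_tan M X : exp M * (1 + (X - M)) <= exp X.
Proof.
  replace (exp X) with (exp M * exp (X - M)) by (rewrite <- exp_plus; f_equal; ring).
  apply Rmult_le_compat_l. left; apply exp_pos. apply exp_ineq1_le.
Qed.

Lemma amgm3 a b c A B C : 0 <= a -> 0 <= b -> 0 <= c -> a + b + c = 1 ->
  exp (a*A + b*B + c*C) <= a * exp A + b * exp B + c * exp C.
Proof.
  intros Ha Hb Hc Hs.
  set (M := a*A + b*B + c*C).
  pose proof (exp_tan M A) as HA. pose proof (exp_tan M B) as HB. pose proof (exp_tan M C) as HC.
  apply Rmult_le_compat_l with (r := a) in HA; auto.
  apply Rmult_le_compat_l with (r := b) in HB; auto.
  apply Rmult_le_compat_l with (r := c) in HC; auto.
  assert (E : a * (exp M * (1 + (A - M))) + b * (exp M * (1 + (B - M))) + c * (exp M * (1 + (C - M)))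
     = exp M * ((a + b + c) + (a*A+b*B+c*C) - (a+b+c)*M)) by ring.
  rewrite Hs in E. fold M in E. replace (exp M * (1 + M - 1 * M)) with (exp M) in E by ring.
  lra.
Qed.

Lemma bernoulli t r : 0 < t -> 1 <= r -> 1 + r * (t - 1) <= exp (r * ln t).
Proof.
  intros Ht Hr.
  pose proof (amgm3 (1/r) (1 - 1/r) 0 (r * ln t) 0 0) as H.
  assert (0 < 1/r <= 1).
  { split. apply Rdiv_lt_0_compat; lra. unfold Rdiv. rewrite Rmult_1_l.
    rewrite <- Rinv_1. apply Rinv_le_contravar; lra. }
  assert (E : 1 / r * (r * ln t) + (1 - 1 / r) * 0 + 0 * 0 = ln t) by (field; lra).
  rewrite E, exp_ln in H by auto. rewrite exp_0 in H.
  assert (H' : t <= 1/r * exp (r * ln t) + (1 - 1/r)) by (apply (Rle_trans _ _ _ (H ltac:(lra) ltac:(lra) ltac:(lra) ltac:(lra))); lra).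
  apply Rmult_le_compat_l with (r := r) in H'; [|lra].
  replace (r * (1 / r * exp (r * ln t) + (1 - 1 / r))) with (exp (r * ln t) + r - 1) in H' by (field; lra).
  lra.
Qed.

Lemma tangent a x r : 0 < a -> 0 < x -> 1 <= r ->
  Rpower x r + r * Rpower x (r - 1) * (a - x) <= Rpower a r.
Proof.
  intros Ha Hx Hr. unfold Rpower.
  pose proof (bernoulli (a / x) r ltac:(apply Rdiv_lt_0_compat; auto) Hr) as B.
  unfold Rdiv in B; rewrite ln_mult, ln_Rinv in B by (try apply Rinv_0_lt_compat; auto).
  replace (ln a + - ln x) with (ln a - ln x) in B by ring.
  replace (r * (ln a - ln x)) with (r * ln a + - (r * ln x)) in B by ring.
  rewrite exp_plus, exp_Ropp in B.
  replace ((r - 1) * ln x) with (r * ln x + - ln x) by ring.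
  rewrite exp_plus, exp_Ropp, exp_ln by auto.
  set (Ex := exp (r * ln x)) in *. set (Ea := exp (r * ln a)) in *.
  assert (0 < Ex) by apply exp_pos.
  apply Rmult_le_compat_l with (r := Ex) in B; [|lra].
  replace (Ex * (Ea * / Ex)) with Ea in B by (field; lra).
  replace (Ex * (1 + r * (a * / x - 1))) with (Ex + r * (Ex * / x) * (a - x)) in B by (field; lra).
  exact B.
Qed.
From Stdlib Require Import Reals Lra Psatz.
Open Scope R_scope.

Definition Fz (a r x : R) := (Rpower a r + Rpower x r) * (x - a) * ((r + 1) / 2) - Rpower x (r + 1).
Definition Fz' (a r x : R) :=
  (r * Rpower x (r - 1) * (x - a) + (Rpower a r + Rpower x r)) * ((r + 1) / 2)
  - (r + 1) * Rpower x r.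

Lemma Fz_der a r x : 0 < x -> derivable_pt_lim (Fz a r) x (Fz' a r x).
Proof.
  intros Hx.
  assert (H1: derivable_pt_lim (fun y => Rpower a r + Rpower y r) x (0 + r*Rpower x (r-1))).
  { apply (derivable_pt_lim_plus (fun _ => Rpower a r) (fun y => Rpower y r)).
    apply derivable_pt_lim_const. apply derivable_pt_lim_power; auto. }
  assert (H2: derivable_pt_lim (fun y => y - a) x (1 - 0)).
  { apply (derivable_pt_lim_minus (fun y => y) (fun _ => a)).
    apply derivable_pt_lim_id. apply derivable_pt_lim_const. }
  pose proof (derivable_pt_lim_mult _ _ _ _ _ H1 H2) as H3.
  pose proof (derivable_pt_lim_mult _ _ _ _ _ H3 (derivable_pt_lim_const ((r+1)/2) x)) as H4.
  pose proof (derivable_pt_lim_power x (r + 1) Hx) as H5.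
  pose proof (derivable_pt_lim_minus _ _ _ _ _ H4 H5) as H6.
  match type of H6 with derivable_pt_lim _ _ ?l => replace (Fz' a r x) with l end.
  exact H6.
  unfold Fz', mult_fct, fct_cte. replace (r + 1 - 1) with r by ring. ring.
Qed.

Lemma Fz'_ge0 a r x : 0 < a -> 0 < x -> 1 <= r -> 0 <= Fz' a r x.
Proof.
  intros Ha Hx Hr. pose proof (tangent a x r Ha Hx Hr). unfold Fz'.
  set (u := Rpower x (r-1)) in *. set (A := Rpower a r) in *. set (X := Rpower x r) in *.
  replace ((r * u * (x - a) + (A + X)) * ((r + 1) / 2) - (r + 1) * X)
    with ((r+1)/2 * (A - (X + r * u * (a - x)))) by field.
  apply Rmult_le_pos; lra.
Qed.

Lemma Fz_mono a r x y : 0 < a -> 1 <= r -> 0 < x -> x <= y -> Fz a r x <= Fz a r y.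
Proof.
  intros Ha Hr Hx Hxy. destruct (Req_dec x y) as [->|Hne]; [lra|].
  destruct (MVT_cor2 (Fz a r) (Fz' a r) x y ltac:(lra)) as [c [Hc1 Hc2]].
  { intros c Hc. apply Fz_der. lra. }
  pose proof (Fz'_ge0 a r c Ha ltac:(lra) Hr). nra.
Qed.

Lemma trapezoid a b r : 0 < a -> 0 < b -> 1 <= r ->
  (Rpower b (r + 1) - Rpower a (r + 1)) / ((r + 1) * (b - a)) <= (Rpower a r + Rpower b r) / 2.
Proof.
  intros Ha Hb Hr.
  assert (Fa : Fz a r a = - Rpower a (r+1)) by (unfold Fz; ring).
  unfold Fz in Fa.
  destruct (Rtotal_order a b) as [Hab|[Hab|Hab]].
  - pose proof (Fz_mono a r a b Ha Hr Ha (Rlt_le _ _ Hab)) as H. unfold Fz in H.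
    apply (Rmult_le_reg_r ((r + 1) * (b - a))). apply Rmult_lt_0_compat; lra.
    unfold Rdiv at 1. rewrite Rmult_assoc, Rinv_l, Rmult_1_r. 2: apply Rmult_integral_contrapositive; split; lra.
    lra.
  - subst b. replace ((r + 1) * (a - a)) with 0 by ring. unfold Rdiv at 1. rewrite Rinv_0, Rmult_0_r.
    unfold Rpower. pose proof (exp_pos (r * ln a)). lra.
  - pose proof (Fz_mono a r b a Ha Hr Hb (Rlt_le _ _ Hab)) as H. unfold Fz in H.
    replace ((Rpower b (r + 1) - Rpower a (r + 1)) / ((r + 1) * (b - a)))
      with ((Rpower a (r + 1) - Rpower b (r + 1)) / ((r + 1) * (a - b))) by (field; lra).
    apply (Rmult_le_reg_r ((r + 1) * (a - b))). apply Rmult_lt_0_compat; lra.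
    unfold Rdiv at 1. rewrite Rmult_assoc, Rinv_l, Rmult_1_r. 2: apply Rmult_integral_contrapositive; split; lra.
    lra.
Qed.
From Stdlib Require Import Reals Lra Lia Psatz.
Open Scope R_scope.

Lemma sum_nonneg f L : (forall i, (i <= L)%nat -> 0 <= f i) -> 0 <= sum_f_R0 f L.
Proof.
  induction L; intros H; simpl. apply H; lia.
  apply Rplus_le_le_0_compat. apply IHL; intros; apply H; lia. apply H; lia.
Qed.

Lemma sum_ge_term f L i : (forall j, (j <= L)%nat -> 0 <= f j) -> (i <= L)%nat -> f i <= sum_f_R0 f L.
Proof.
  induction L; intros H Hi; simpl.
  - replace i with 0%nat by lia. lra.
  - destruct (Nat.eq_dec i (S L)) as [->|Hne].
    + pose proof (sum_nonneg f L ltac:(intros; apply H; lia)). lra.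
    + pose proof (IHL ltac:(intros; apply H; lia) ltac:(lia)). pose proof (H (S L) ltac:(lia)). lra.
Qed.

Lemma sum_prefix f L d : (forall j, 0 <= f j) -> sum_f_R0 f L <= sum_f_R0 f (L + d).
Proof.
  intros H. induction d. rewrite Nat.add_0_r; lra.
  rewrite Nat.add_succ_r. simpl. pose proof (H (S (L + d))). lra.
Qed.

Lemma sum_tail0 f M d : (forall j, (M < j)%nat -> f j = 0) -> sum_f_R0 f (M + d) = sum_f_R0 f M.
Proof.
  intros H. induction d. rewrite Nat.add_0_r; lra.
  rewrite Nat.add_succ_r. simpl. rewrite IHd, H by lia. ring.
Qed.

Lemma sum_le_supp f L M : (forall j, 0 <= f j) -> (forall j, (M < j)%nat -> f j = 0) ->
  sum_f_R0 f L <= sum_f_R0 f M.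
Proof.
  intros H0 H1. destruct (Compare_dec.le_lt_dec L M).
  - replace M with (L + (M - L))%nat by lia. apply sum_prefix; auto.
  - replace L with (M + (L - M))%nat by lia. rewrite sum_tail0; auto. lra.
Qed.

Lemma sum_rev g l : sum_f_R0 (fun i => g (l - i)%nat) l = sum_f_R0 g l.
Proof.
  revert g. induction l; intros g. simpl. reflexivity.
  rewrite decomp_sum by lia. simpl pred.
  replace (sum_f_R0 (fun i : nat => g (S l - S i)%nat) l) with (sum_f_R0 (fun i => g (l - i)%nat) l).
  2: { apply sum_eq; intros i Hi. reflexivity. }
  rewrite IHl. rewrite tech5. rewrite Nat.sub_0_r. ring.
Qed.

Lemma sum_halves f L : sum_f_R0 (fun j => (f j + f (S j)) / 2) L
  = sum_f_R0 f (S L) - (f 0%nat + f (S L)) / 2.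
Proof.
  induction L. simpl. field.
  rewrite tech5, IHL. rewrite (tech5 f (S L)). field.
Qed.

Lemma sum_ind_k x k L : (k <= L)%nat -> sum_f_R0 (fun j => if Nat.eqb j k then x else 0) L = x.
Proof.
  induction L; intros Hk.
  - simpl. replace k with 0%nat by lia. reflexivity.
  - rewrite tech5. destruct (Nat.eq_dec k (S L)) as [->|Hne].
    + rewrite Nat.eqb_refl.
      assert (E : sum_f_R0 (fun j => if Nat.eqb j (S L) then x else 0) L = 0).
      { clear IHL Hk. assert (forall L', (L' <= L)%nat -> sum_f_R0 (fun j => if Nat.eqb j (S L) then x else 0) L' = 0).
        { induction L'; intros; simpl. reflexivity. rewrite IHL' by lia.
          rewrite (proj2 (Nat.eqb_neq L' L)) by lia. ring. }
        apply H; lia. }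
      rewrite E. ring.
    + rewrite IHL by lia. rewrite (proj2 (Nat.eqb_neq (S L) k)) by lia. ring.
Qed.
From Stdlib Require Import Reals Lra Lia Psatz.
Open Scope R_scope.

Lemma Cpos N j : (j <= N)%nat -> 0 < C N j.
Proof. intros H. rewrite BinM.binC by exact H. apply BinM.bin_pos; exact H. Qed.

Lemma C0 N : C N 0 = 1.
Proof. unfold C. rewrite Nat.sub_0_r. simpl. field. apply not_0_INR, fact_neq_0. Qed.

Lemma CNN N : C N N = 1.
Proof. unfold C. rewrite Nat.sub_diag. simpl. field. apply not_0_INR, fact_neq_0. Qed.

Lemma Rpower1 r : Rpower 1 r = 1.
Proof. unfold Rpower. rewrite ln_1, Rmult_0_r. apply exp_0. Qed.

Lemma Rpower_pos x r : 0 < Rpower x r.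
Proof. apply exp_pos. Qed.

Lemma Rdiv_le_0_compat a b : 0 <= a -> 0 < b -> 0 <= a / b.
Proof. intros. unfold Rdiv. apply Rmult_le_pos; auto. left; apply Rinv_0_lt_compat; auto. Qed.

Lemma lhs_term_nonneg N k r j : 1 <= r -> (S j <= N)%nat -> 0 <= lhs_term N k r j.
Proof.
  intros Hr Hj. unfold lhs_term. destruct (Nat.eqb j k). lra.
  pose proof (Cpos N j ltac:(lia)) as Ha. pose proof (Cpos N (S j) Hj) as Hb.
  set (a := C N j) in *. set (b := C N (S j)) in *.
  destruct (Rtotal_order a b) as [H|[H|H]].
  - pose proof (Rlt_Rpower_l a b (r+1) ltac:(lra) ltac:(lra)).
    apply Rdiv_le_0_compat. lra. apply Rmult_lt_0_compat; lra.
  - rewrite H. replace ((r + 1) * (b - b)) with 0 by ring. unfold Rdiv; rewrite Rinv_0; lra.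
  - pose proof (Rlt_Rpower_l b a (r+1) ltac:(lra) ltac:(lra)).
    replace ((Rpower b (r + 1) - Rpower a (r + 1)) / ((r + 1) * (b - a)))
      with ((Rpower a (r + 1) - Rpower b (r + 1)) / ((r + 1) * (a - b))) by (field; lra).
    apply Rdiv_le_0_compat. lra. apply Rmult_lt_0_compat; lra.
Qed.

Lemma lhs_bound k r : 1 <= r ->
  0 < 2/(r+1) + Rpower (C (k+k+1) k) r + lhs_sum (k+k+1) k r /\
  2/(r+1) + Rpower (C (k+k+1) k) r + lhs_sum (k+k+1) k r
    <= sum_f_R0 (fun l => Rpower (C (k+k+1) l) r) (k+k+1).
Proof.
  intros Hr. set (N := (k+k+1)%nat).
  assert (Hmid : C N k = C N (S k)).
  { unfold N. rewrite !BinM.binC by lia. rewrite BinM.bin_mid. reflexivity. }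
  unfold lhs_sum. replace (N - 1)%nat with (k+k)%nat by (unfold N; lia).
  split.
  - assert (0 < 2 / (r+1)) by (apply Rdiv_lt_0_compat; lra).
    pose proof (Rpower_pos (C N k) r).
    assert (0 <= sum_f_R0 (lhs_term N k r) (k + k)).
    { apply sum_nonneg. intros i Hi. apply lhs_term_nonneg; auto. unfold N; lia. }
    lra.
  - set (f := fun j => Rpower (C N j) r).
    assert (Hle : sum_f_R0 (lhs_term N k r) (k + k) <=
      sum_f_R0 (fun j => (f j + f (S j)) / 2 - (if Nat.eqb j k then f k else 0)) (k + k)).
    { apply sum_Rle. intros j Hj. unfold lhs_term, f.
      destruct (Nat.eqb_spec j k) as [->|Hne].
      - rewrite <- Hmid. lra.
      - rewrite Rminus_0_r. apply trapezoid; auto; apply Cpos; unfold N; lia. }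
    rewrite minus_sum, sum_halves, sum_ind_k in Hle by lia.
    replace (S (k + k)) with N in Hle by (unfold N; lia).
    assert (f 0%nat = 1) by (unfold f; rewrite C0; apply Rpower1).
    assert (f N = 1) by (unfold f; rewrite CNN; apply Rpower1).
    assert (2 / (r+1) <= 1).
    { apply (Rmult_le_reg_r (r+1)); [lra|]. unfold Rdiv. rewrite Rmult_assoc, Rinv_l by lra. lra. }
    fold (f k). unfold f in *. lra.
Qed.

Definition pw (x s : R) : R := if Rlt_dec 0 x then Rpower x s else 0.

Lemma pw_nonneg x s : 0 <= pw x s.
Proof. unfold pw. destruct (Rlt_dec 0 x). left; apply Rpower_pos. lra. Qed.

Lemma pw_pos x s : 0 < x -> pw x s = exp (s * ln x).
Proof. intros H. unfold pw. destruct (Rlt_dec 0 x). reflexivity. lra. Qed.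

Lemma pw_0 s : pw 0 s = 0.
Proof. unfold pw. destruct (Rlt_dec 0 0). lra. reflexivity. Qed.

Lemma term_bound x y p q T A B al be ga :
  0 <= x -> 0 <= y -> 0 < T -> 0 < A -> 0 < B -> 0 <= al -> 0 <= be -> 0 <= ga ->
  al + be + ga = 1 -> al * q + be * q = 1 -> al * p + ga * p = 1 ->
  x * y <= exp (al * ln T + be * ln A + ga * ln B) *
     (al * ((pw x q * pw y p) * / T) + be * (pw x q * / A) + ga * (pw y p * / B)).
Proof.
  intros Hx Hy HT HA HB Hal Hbe Hga Hs Hq Hp.
  destruct (Rlt_dec 0 x) as [Hx'|Hx']; [destruct (Rlt_dec 0 y) as [Hy'|Hy']|].
  - rewrite !pw_pos by auto.
    set (X := ln x). set (Y := ln y).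
    assert (E1 : exp (q * X) * exp (p * Y) * / T = exp (q * X + p * Y + - ln T))
      by (rewrite !exp_plus, exp_Ropp, exp_ln; auto).
    assert (E2 : exp (q * X) * / A = exp (q * X + - ln A))
      by (rewrite !exp_plus, exp_Ropp, exp_ln; auto).
    assert (E3 : exp (p * Y) * / B = exp (p * Y + - ln B))
      by (rewrite !exp_plus, exp_Ropp, exp_ln; auto).
    rewrite E1, E2, E3.
    pose proof (amgm3 al be ga (q * X + p * Y + - ln T) (q * X + - ln A) (p * Y + - ln B) Hal Hbe Hga Hs) as H.
    set (L := al * ln T + be * ln A + ga * ln B) in *.
    replace (al * (q * X + p * Y + - ln T) + be * (q * X + - ln A) + ga * (p * Y + - ln B))
      with (X + Y - L) in H.
    2: { transitivity ((al*q+be*q) * X + (al*p+ga*p)*Y - L). rewrite Hq, Hp; ring. unfold L; ring. }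
    replace (x * y) with (exp L * exp (X + Y - L)).
    2: { rewrite <- exp_plus. replace (L + (X + Y - L)) with (X + Y) by ring. rewrite exp_plus. unfold X, Y. rewrite !exp_ln; auto. }
    apply Rmult_le_compat_l. left; apply exp_pos. exact H.
  - assert (y = 0) by lra. subst y. rewrite Rmult_0_r.
    apply Rmult_le_pos. left; apply exp_pos.
    pose proof (pw_nonneg x q). pose proof (pw_nonneg 0 p).
    pose proof (Rinv_0_lt_compat _ HT). pose proof (Rinv_0_lt_compat _ HA). pose proof (Rinv_0_lt_compat _ HB).
    repeat apply Rplus_le_le_0_compat; repeat apply Rmult_le_pos; lra.
  - assert (x = 0) by lra. subst x. rewrite Rmult_0_l.
    apply Rmult_le_pos. left; apply exp_pos.
    pose proof (pw_nonneg 0 q). pose proof (pw_nonneg y p).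
    pose proof (Rinv_0_lt_compat _ HT). pose proof (Rinv_0_lt_compat _ HA). pose proof (Rinv_0_lt_compat _ HB).
    repeat apply Rplus_le_le_0_compat; repeat apply Rmult_le_pos; lra.
Qed.

Lemma sum_lin3 K al be ga U V W L :
  sum_f_R0 (fun i => K * (al * U i + be * V i + ga * W i)) L
  = K * (al * sum_f_R0 U L + be * sum_f_R0 V L + ga * sum_f_R0 W L).
Proof. induction L; simpl. ring. rewrite IHL. ring. Qed.

Lemma sum_scal_r X c L : sum_f_R0 (fun i => X i * c) L = sum_f_R0 X L * c.
Proof. rewrite <- scal_sum. ring. Qed.

Section Y.
Variables (m n : nat) (p q r : R).
Hypotheses (Hp : 1 <= p) (Hq : 1 <= q) (Hr : 1 <= r) (Hpqr : 1 / r = 1 / p + 1 / q - 1).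

Let a i := INR (BinM.bn m i).
Let b j := INR (BinM.bn n j).
Let A := sum_f_R0 (fun i => pw (a i) q) m.
Let B := sum_f_R0 (fun j => pw (b j) p) n.
Let T l := sum_f_R0 (fun i => pw (a i) q * pw (b (l - i)%nat) p) l.
Let al := 1 / r.
Let be := 1 / q - 1 / r.
Let ga := 1 / p - 1 / r.

Lemma a_nonneg i : 0 <= a i. Proof. apply pos_INR. Qed.
Lemma b_nonneg i : 0 <= b i. Proof. apply pos_INR. Qed.

Lemma A_pos : 0 < A.
Proof.
  unfold A. eapply Rlt_le_trans. 2: apply (sum_ge_term _ m 0%nat); [intros; apply pw_nonneg | lia].
  cbv beta. rewrite pw_pos. apply exp_pos. apply BinM.bin_pos; lia.
Qed.

Lemma B_pos : 0 < B.
Proof.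
  unfold B. eapply Rlt_le_trans. 2: apply (sum_ge_term _ n 0%nat); [intros; apply pw_nonneg | lia].
  cbv beta. rewrite pw_pos. apply exp_pos. apply BinM.bin_pos; lia.
Qed.

Lemma T_pos l : (l <= m + n)%nat -> 0 < T l.
Proof.
  intros Hl. unfold T. set (i0 := Nat.min l m).
  eapply Rlt_le_trans. 2: apply (sum_ge_term _ l i0); [intros; apply Rmult_le_pos; apply pw_nonneg | unfold i0; lia].
  cbv beta. rewrite !pw_pos. apply Rmult_lt_0_compat; apply exp_pos.
  apply BinM.bin_pos; unfold i0; lia. apply BinM.bin_pos; unfold i0; lia.
Qed.

Lemma exps : 0 <= al /\ 0 <= be /\ 0 <= ga /\ al + be + ga = 1 /\ al * q + be * q = 1 /\ al * p + ga * p = 1.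
Proof.
  assert (0 < 1/p <= 1). { split. apply Rdiv_lt_0_compat; lra. unfold Rdiv. rewrite Rmult_1_l, <- Rinv_1. apply Rinv_le_contravar; lra. }
  assert (0 < 1/q <= 1). { split. apply Rdiv_lt_0_compat; lra. unfold Rdiv. rewrite Rmult_1_l, <- Rinv_1. apply Rinv_le_contravar; lra. }
  assert (0 < 1/r) by (apply Rdiv_lt_0_compat; lra).
  unfold al, be, ga. rewrite Hpqr. repeat split; try lra.
  - replace ((1 / p + 1 / q - 1) * q + (1 / q - (1 / p + 1 / q - 1)) * q) with (q * (1/q)) by ring. field; lra.
  - replace ((1 / p + 1 / q - 1) * p + (1 / p - (1 / p + 1 / q - 1)) * p) with (p * (1/p)) by ring. field; lra.
Qed.

Lemma holder_l l : (l <= m + n)%nat ->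
  Rpower (INR (BinM.bn (m + n) l)) r <= T l * exp (r * be * ln A + r * ga * ln B).
Proof.
  intros Hl. destruct exps as (Hal & Hbe & Hga & Hs & Hq' & Hp').
  pose proof (T_pos l Hl) as HT. pose proof A_pos as HA. pose proof B_pos as HB.
  set (K := exp (al * ln (T l) + be * ln A + ga * ln B)).
  assert (Hc : INR (BinM.bn (m + n) l) <= K).
  { rewrite BinM.vand.
    eapply Rle_trans. apply sum_Rle. intros i Hi.
    apply (term_bound (a i) (b (l - i)%nat) p q (T l) A B al be ga); auto using a_nonneg, b_nonneg.
    rewrite sum_lin3. fold K.
    rewrite !sum_scal_r. fold (T l).
    assert (HV : sum_f_R0 (fun i => pw (a i) q) l <= A).
    { apply sum_le_supp. intros; apply pw_nonneg. intros j Hj. unfold a. rewrite BinM.bin_zero by lia. apply pw_0. }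
    assert (HW : sum_f_R0 (fun i => pw (b (l - i)%nat) p) l <= B).
    { rewrite (sum_rev (fun j => pw (b j) p)). apply sum_le_supp. intros; apply pw_nonneg. intros j Hj. unfold b. rewrite BinM.bin_zero by lia. apply pw_0. }
    assert (HV' : sum_f_R0 (fun i => pw (a i) q) l * / A <= 1).
    { apply (Rmult_le_reg_r A); auto. rewrite Rmult_assoc, Rinv_l by lra. lra. }
    assert (HW' : sum_f_R0 (fun i => pw (b (l - i)%nat) p) l * / B <= 1).
    { apply (Rmult_le_reg_r B); auto. rewrite Rmult_assoc, Rinv_l by lra. lra. }
    rewrite Rinv_r by lra.
    assert (0 < K) by apply exp_pos.
    match goal with |- K * (al * 1 + be * ?V + ga * ?W) <= K =>
      assert (al * 1 + be * V + ga * W <= 1) by nra end.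
    rewrite <- (Rmult_1_r K) at 2. apply Rmult_le_compat_l; lra. }
  eapply Rle_trans. apply Rle_Rpower_l. lra. split. apply BinM.bin_pos; lia. exact Hc.
  unfold K, Rpower. rewrite ln_exp.
  replace (r * (al * ln (T l) + be * ln A + ga * ln B)) with (ln (T l) + (r * be * ln A + r * ga * ln B)).
  2: { unfold al. field. lra. }
  rewrite exp_plus, exp_ln by auto. lra.
Qed.

Lemma young_sum : (0 < m + n)%nat ->
  sum_f_R0 (fun l => Rpower (C (m + n) l) r) (m + n)
  <= A * B * exp (r * be * ln A + r * ga * ln B).
Proof.
  intros HN.
  set (Z := exp (r * be * ln A + r * ga * ln B)).
  eapply Rle_trans. apply sum_Rle. intros l Hl. rewrite BinM.binC by lia. apply holder_l; lia.
  rewrite sum_scal_r. apply Rmult_le_compat_r. left; apply exp_pos.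
  pose proof (cauchy_finite (fun i => pw (a i) q) (fun j => pw (b j) p) (m + n) HN) as Hc.
  assert (0 <= sum_f_R0 (fun k : nat => sum_f_R0 (fun l : nat => pw (a (S (l + k))) q * pw (b (m + n - l)%nat) p)
            (Init.Nat.pred (m + n - k))) (Init.Nat.pred (m + n))).
  { apply sum_nonneg; intros; apply sum_nonneg; intros; apply Rmult_le_pos; apply pw_nonneg. }
  assert (EA : sum_f_R0 (fun i => pw (a i) q) (m + n) = A).
  { unfold A. apply sum_tail0. intros j Hj. unfold a. rewrite BinM.bin_zero by lia. apply pw_0. }
  assert (EB : sum_f_R0 (fun j => pw (b j) p) (m + n) = B).
  { unfold B. rewrite Nat.add_comm. apply sum_tail0. intros j Hj. unfold b. rewrite BinM.bin_zero by lia. apply pw_0. }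
  rewrite EA, EB in Hc. unfold T. lra.
Qed.

Lemma A_eq : binom_power_sum m q = A.
Proof.
  unfold binom_power_sum, A. apply sum_eq. intros i Hi. unfold a.
  rewrite BinM.binC by lia. rewrite pw_pos. reflexivity. apply BinM.bin_pos; lia.
Qed.

Lemma B_eq : binom_power_sum n p = B.
Proof.
  unfold binom_power_sum, B. apply sum_eq. intros i Hi. unfold b.
  rewrite BinM.binC by lia. rewrite pw_pos. reflexivity. apply BinM.bin_pos; lia.
Qed.

Lemma final_bound S : 0 < S -> (0 < m + n)%nat ->
  S <= sum_f_R0 (fun l => Rpower (C (m + n) l) r) (m + n) ->
  Rpower S (1 / r) <= Rpower (binom_power_sum m q) (1 / q) * Rpower (binom_power_sum n p) (1 / p).
Proof.
  intros HS HN Hle. pose proof (young_sum HN) as Hy.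
  pose proof A_pos as HA. pose proof B_pos as HB.
  assert (0 < 1/r) by (apply Rdiv_lt_0_compat; lra).
  eapply Rle_trans. apply Rle_Rpower_l. lra. split. exact HS. eapply Rle_trans; [exact Hle | exact Hy].
  rewrite A_eq, B_eq. unfold Rpower.
  rewrite !ln_mult, ln_exp by (try apply Rmult_lt_0_compat; try apply exp_pos; auto).
  rewrite <- exp_plus. right. f_equal. unfold be, ga. field. lra.
Qed.
End Y.
From Stdlib Require Import ZArith.

Theorem mainTheorem12 (m n : nat) (p q r : R)
  (Hmn : Z.modulo (Z.of_nat m - Z.of_nat n) 2 = 1%Z)
  (Hp : 1 <= p) (Hq : 1 <= q) (Hr : 1 <= r)
  (Hpqr : 1 / r = 1 / p + 1 / q - 1) :
  let N := (m + n)%nat in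
  let k := ((N - 1) / 2)%nat in
  Rpower (2 / (r + 1) + Rpower (C N k) r + lhs_sum N k r) (1 / r)
  <= Rpower (binom_power_sum m q) (1 / q) * Rpower (binom_power_sum n p) (1 / p).
Proof.
  intros N k.
  assert (Hodd : exists kk, (m + n = kk + kk + 1)%nat).
  { destruct (Nat.Even_or_Odd (m + n)) as [[t Ht]|[t Ht]].
    - exfalso. pose proof (Z.div_mod (Z.of_nat m - Z.of_nat n) 2 ltac:(lia)) as D.
      rewrite Hmn in D. lia.
    - exists t. lia. }
  destruct Hodd as [kk Hkk].
  assert (HN : N = (kk + kk + 1)%nat) by (unfold N; lia).
  assert (Hk : k = kk).
  { unfold k. rewrite HN. replace (kk + kk + 1 - 1)%nat with (kk * 2)%nat by lia. apply Nat.div_mul. lia. }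
  rewrite Hk, HN.
  destruct (lhs_bound kk r Hr) as [H1 H2].
  apply final_bound; auto. lia. rewrite Hkk. exact H2.
Qed.
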